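(* Let $A$ be a noetherian ring and let $E$ be a finitely generated $A$-module. For each prime ideal $\mathfrak{p} \subset A$, let a submodule $J(\mathfrak{p}) \subset E_{\mathfrak{p}}$ be given. There exists a submodule $F\subset E$ such that $F_{\mathfrak{p}} = J(\mathfrak{p})$ for all primes $\mathfrak{p}\subset A$ if and only if both of the following conditions hold: (Consistency) For all primes $\mathfrak{p} \subset \mathfrak{q} \subset A$, we have $J(\mathfrak{p}) = J(\mathfrak{q})_{\mathfrak{p} A_{\mathfrak{q}}} = A_{\mathfrak{p}}\otimes_{A_{\mathfrak{q}}} J(\mathfrak{q})$ as submodules of $E_{\mathfrak{p}}$. (Finiteness) The set $\mathfrak{A}$ of all primes $\mathfrak{p}\subset A$ for which $\mathfrak{p} A_{\mathfrak{p}}$ is an associated prime of the $A_{\mathfrak{p}}$-module $E_{\mathfrak{p}}/J(\mathfrak{p})$ is finite. Moreover, when such $F$ exists it is unique, and $\mathrm{Ass}_A(E/F) = \mathfrak{A}$.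
   Context: For primes $\mathfrak{p}\subset\mathfrak{q}$, $E_{\mathfrak{p}}$ is identified with the localization of the $A_{\mathfrak{q}}$-module $E_{\mathfrak{q}}$ at $\mathfrak{p}A_{\mathfrak{q}}$, and $J(\mathfrak{q})_{\mathfrak{p}A_{\mathfrak{q}}}$ denotes the localization of $J(\mathfrak{q})$, viewed as a submodule of $E_{\mathfrak{p}}$. $\mathrm{Ass}_A(M)$ denotes the set of associated primes of an $A$-module $M$. *)

(* Defs.v *)
From mathcomp Require Import all_boot all_order all_algebra.
Set Implicit Arguments. Unset Strict Implicit. Unset Printing Implicit Defensive.
Import GRing.Theory.
Local Open Scope ring_scope.

Section CommAlg.
Variables (A : comNzRingType) (E : lmodType A).

Definition is_ideal (I : A -> Prop) : Prop :=
  I 0 /\ (forall x y, I x -> I y -> I (x + y)) /\ (forall a y, I y -> I (a * y)).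

Definition is_prime (P : A -> Prop) : Prop :=
  is_ideal P /\ ~ P 1 /\ (forall a b, P (a * b) -> P a \/ P b).

Definition noetherian : Prop :=
  forall I : A -> Prop, is_ideal I ->
    exists (n : nat) (g : 'I_n -> A),
      forall x, I x <-> exists c : 'I_n -> A, x = \sum_(i < n) c i * g i.

Definition fin_gen : Prop :=
  exists (n : nat) (g : 'I_n -> E),
    forall x : E, exists c : 'I_n -> A, x = \sum_(i < n) c i *: g i.

Definition is_submod (F : E -> Prop) : Prop :=
  F 0 /\ (forall x y, F x -> F y -> F (x + y)) /\ (forall a x, F x -> F (a *: x)).

(** Localization E_p: an element is a fraction e/s with s outside p;
    e/s = e'/s' iff t (s' e - s e') = 0 for some t outside p. *)
Definition fr_eq (p : A -> Prop) (e : E) (s : A) (e' : E) (s' : A) : Prop :=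
  exists t, ~ p t /\ t *: (s' *: e - s *: e') = 0.

(** A submodule of the A_p-module E_p, represented as the set of all
    fractions (e, s) (s outside p) representing one of its elements. *)
Definition is_locsub (p : A -> Prop) (J : E -> A -> Prop) : Prop :=
  (forall e s, J e s -> ~ p s) /\
  (forall e s e' s', J e s -> ~ p s' -> fr_eq p e s e' s' -> J e' s') /\
  J 0 1 /\
  (forall e s e' s', J e s -> J e' s' -> J (s' *: e + s *: e') (s * s')) /\
  (forall a t e s, ~ p t -> J e s -> J (a *: e) (t * s)).

Definition loc (p : A -> Prop) (F : E -> Prop) (e : E) (s : A) : Prop :=
  ~ p s /\ exists f u, F f /\ ~ p u /\ fr_eq p e s f u.

(** For p ⊆ q, J(q)_{pA_q} viewed inside E_p = (E_q)_{pA_q}: the elements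
    (e'/s') / (t/u) = (u e')/(s' t) with e'/s' in J(q), t ∉ p, u ∉ q. *)
Definition relloc (p q : A -> Prop) (Jq : E -> A -> Prop) (e : E) (s : A) : Prop :=
  ~ p s /\ exists e' s' t u, Jq e' s' /\ ~ p t /\ ~ q u /\
     fr_eq p e s (u *: e') (s' * t).

(** a/t ∈ pA_p (as an element of A_p). *)
Definition in_pAp (p : A -> Prop) (a t : A) : Prop :=
  exists b u, p b /\ ~ p u /\ exists v, ~ p v /\ v * (a * u - b * t) = 0.

(** p A_p is an associated prime of the A_p-module E_p / J(p):
    some x = e/s in E_p has annihilator (mod J(p)) equal to pA_p. *)
Definition locally_assoc (p : A -> Prop) (Jp : E -> A -> Prop) : Prop :=
  exists e s, ~ p s /\
    forall a t, ~ p t -> (Jp (a *: e) (t * s) <-> in_pAp p a t).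

Definition frakA (J : (A -> Prop) -> E -> A -> Prop) (p : A -> Prop) : Prop :=
  is_prime p /\ locally_assoc p (J p).

Definition assoc_quot (F : E -> Prop) (P : A -> Prop) : Prop :=
  is_prime P /\ exists e : E, forall a, F (a *: e) <-> P a.

Definition finite_primes (S : (A -> Prop) -> Prop) : Prop :=
  exists (n : nat) (L : nat -> A -> Prop),
    forall P, S P -> exists i, (i < n)%N /\ forall x, P x <-> L i x.

Definition realizes (J : (A -> Prop) -> E -> A -> Prop) (F : E -> Prop) : Prop :=
  is_submod F /\ forall p, is_prime p -> forall e s, loc p F e s <-> J p e s.

Definition consistency (J : (A -> Prop) -> E -> A -> Prop) : Prop :=
  forall p q, is_prime p -> is_prime q -> (forall x, p x -> q x) ->
    forall e s, J p e s <-> relloc p q (J q) e s.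

End CommAlg.

(* Main.v *)
Require Import Defs.
From mathcomp Require Import all_boot all_order all_algebra.
From mathcomp Require Import ring.
From Stdlib Require Import Classical ClassicalEpsilon FunctionalExtensionality PropExtensionality.
Set Implicit Arguments. Unset Strict Implicit. Unset Printing Implicit Defensive.
Import GRing.Theory.
Local Open Scope ring_scope.


Section Basics.
Variable A : comNzRingType.

Lemma my_ideal_sum (I : A -> Prop) (T : Type) (r : seq T) (P : pred T) (F : T -> A) :
  is_ideal I -> (forall i, P i -> I (F i)) -> I (\sum_(i <- r | P i) F i).
Proof. move=> [h0 [hD _]] hF; exact: (big_ind I h0 hD). Qed.

Lemma my_idealM (I : A -> Prop) a x : is_ideal I -> I x -> I (a * x).
Proof. by move=> [_ [_ hM]]; apply: hM. Qed.

Lemma my_idealMr (I : A -> Prop) a x : is_ideal I -> I x -> I (x * a).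
Proof. by move=> hI hx; rewrite mulrC; apply: my_idealM. Qed.

Lemma my_idealD (I : A -> Prop) x y : is_ideal I -> I x -> I y -> I (x + y).
Proof. by move=> [_ [hD _]]; apply: hD. Qed.

Lemma my_idealN (I : A -> Prop) x : is_ideal I -> I x -> I (- x).
Proof. by move=> hI hx; rewrite -mulN1r; apply: my_idealM. Qed.

Lemma my_idealB (I : A -> Prop) x y : is_ideal I -> I x -> I y -> I (x - y).
Proof. by move=> hI hx hy; apply: my_idealD => //; apply: my_idealN. Qed.

Lemma prime_nM (P : A -> Prop) a b : is_prime P -> ~ P a -> ~ P b -> ~ P (a * b).
Proof. by move=> [_ [_ hp]] ha hb /hp []. Qed.

Lemma prime_prod (P : A -> Prop) (T : Type) (r : seq T) (Q : pred T) (F : T -> A) :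
  is_prime P -> (forall i, Q i -> ~ P (F i)) -> ~ P (\prod_(i <- r | Q i) F i).
Proof.
move=> hP hF; apply: (big_ind (fun x => ~ P x)) => //; first by case: hP => _ [].
by move=> x y; apply: prime_nM.
Qed.

Lemma my_ideal_mono (I : nat -> A -> Prop) : (forall k x, I k x -> I k.+1 x) ->
  forall k m, (k <= m)%N -> forall x, I k x -> I m x.
Proof.
move=> H k m /subnK <-; elim: (m - k)%N => // d IH x /IH /H.
by rewrite addSn.
Qed.

Lemma acc_chain : noetherian A -> forall I : nat -> A -> Prop,
  (forall k, is_ideal (I k)) -> (forall k x, I k x -> I k.+1 x) ->
  exists k, forall x, I k.+1 x -> I k x.
Proof.
move=> hN I hI hinc.
pose U x := exists k, I k x.
have hU : is_ideal U.
  split; first by exists 0%N; case: (hI 0%N).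
  split.
  - move=> x y [k hx] [m hy]; exists (maxn k m).
    apply: my_idealD; first exact: hI.
    + exact: (my_ideal_mono hinc (leq_maxl k m)).
    + exact: (my_ideal_mono hinc (leq_maxr k m)).
  - move=> a y [k hy]; exists k; exact: my_idealM.
have [n [g hg]] := hN U hU.
have hgU : forall i, U (g i).
  move=> i; apply/hg; exists (fun j => if j == i then 1 else 0).
  rewrite (bigD1 i) //= eqxx mul1r big1 ?addr0 // => j /negbTE ->; by rewrite mul0r.
pose kf i := proj1_sig (constructive_indefinite_description _ (hgU i)).
have hkf i : I (kf i) (g i) := proj2_sig (constructive_indefinite_description _ (hgU i)).
pose m := (\max_(i < n) kf i)%N.
exists m => x hx.
have : U x by exists m.+1.
move/hg => [c ->].
apply: my_ideal_sum => // i _; apply: my_idealM => //.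
apply: (my_ideal_mono hinc _ (hkf i)). exact: leq_bigmax.
Qed.

Lemma max_elt : noetherian A -> forall (T : Type) (K : T -> A -> Prop), (forall t, is_ideal (K t)) -> T ->
  exists t, forall t', (forall x, K t x -> K t' x) -> forall x, K t' x -> K t x.
Proof.
move=> hN T K hK t0.
apply: NNPP => hno.
have hstep : forall t, exists t', (forall x, K t x -> K t' x) /\ exists x, K t' x /\ ~ K t x.
  move=> t; apply: NNPP => h; apply: hno; exists t => t' h1 x h2.
  apply: NNPP => h3; apply: h; exists t'; split => //; by exists x.
pose f t := proj1_sig (constructive_indefinite_description _ (hstep t)).
have hf t : (forall x, K t x -> K (f t) x) /\ exists x, K (f t) x /\ ~ K t x
  := proj2_sig (constructive_indefinite_description _ (hstep t)).
pose s k := iter k f t0.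
have [k hk] := acc_chain hN (I := fun k => K (s k)) (fun k => hK _) (fun k x => (hf (s k)).1 x).
have [_ [x [hx1 hx2]]] := hf (s k).
exact: hx2 (hk x hx1).
Qed.

Section Mod.
Variable M : lmodType A.

Lemma my_submod0 (G : M -> Prop) : is_submod G -> G 0.
Proof. by case. Qed.
Lemma my_submodD (G : M -> Prop) x y : is_submod G -> G x -> G y -> G (x + y).
Proof. by move=> [_ [h _]]; apply: h. Qed.
Lemma my_submodZ (G : M -> Prop) a x : is_submod G -> G x -> G (a *: x).
Proof. by move=> [_ [_ h]]; apply: h. Qed.
Lemma my_submodN (G : M -> Prop) x : is_submod G -> G x -> G (- x).
Proof. by move=> hG hx; rewrite -scaleN1r; apply: my_submodZ. Qed.
Lemma my_submodB (G : M -> Prop) x y : is_submod G -> G x -> G y -> G (x - y).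
Proof. by move=> hG hx hy; apply: my_submodD => //; apply: my_submodN. Qed.
Lemma my_submod_sum (G : M -> Prop) (T : Type) (r : seq T) (P : pred T) (F : T -> M) :
  is_submod G -> (forall i, P i -> G (F i)) -> G (\sum_(i <- r | P i) F i).
Proof. move=> [h0 [hD _]] hF; exact: (big_ind G h0 hD). Qed.

Lemma max_ann (G : M -> Prop) (x : M) : noetherian A -> is_submod G -> ~ G x ->
  exists b, ~ G (b *: x) /\ is_prime (fun a => G (a *: (b *: x))).
Proof.
move=> hN hG hx.
pose T := {b : A | ~ G (b *: x)}.
pose K (t : T) := fun a => G (a *: (proj1_sig t *: x)).
have hK : forall t, is_ideal (K t).
  move=> t; split; first by rewrite /K scale0r; apply: my_submod0.
  split; first by move=> y z hy hz; rewrite /K scalerDl; apply: my_submodD.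
  by move=> a y hy; rewrite /K -scalerA; apply: my_submodZ.
have t0 : T by exists 1; rewrite scale1r.
have [t ht] := max_elt hN hK t0.
exists (proj1_sig t); split; first exact: (proj2_sig t).
split; first exact: hK.
split; first by rewrite scale1r; exact: (proj2_sig t).
move=> a c hac; case: (classic (K t a)) => ha; [by left | right].
have hab : ~ G ((a * proj1_sig t) *: x) by rewrite -scalerA.
pose t' : T := exist (fun b => ~ G (b *: x)) _ hab.
apply: (ht t').
  move=> d; rewrite /K /t' /= => hd.
  have -> : d *: ((a * proj1_sig t) *: x) = a *: (d *: (proj1_sig t *: x)).
    by rewrite !scalerA; congr (_ *: _); ring.
  exact: my_submodZ.
rewrite /K /t' /=.
have -> : c *: ((a * proj1_sig t) *: x) = (a * c) *: (proj1_sig t *: x).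
  by rewrite !scalerA; congr (_ *: _); ring.
exact: hac.
Qed.

End Mod.
End Basics.


Section Fin.
Variable A : comNzRingType.

Definition AssIn (M : lmodType A) (F H : M -> Prop) (P : A -> Prop) :=
  is_prime P /\ exists y, H y /\ forall a, F (a *: y) <-> P a.

Lemma fin_sub (S S' : (A -> Prop) -> Prop) : (forall P, S P -> S' P) ->
  finite_primes S' -> finite_primes S.
Proof. move=> h [n [L hL]]; exists n, L => P /h; exact: hL. Qed.

Lemma fin_empty (S : (A -> Prop) -> Prop) : (forall P, ~ S P) -> finite_primes S.
Proof. by move=> h; exists 0%N, (fun _ _ => True) => P /h. Qed.

Lemma fin_single (Q : A -> Prop) : finite_primes (fun P => forall x, P x <-> Q x).
Proof. by exists 1%N, (fun _ => Q) => P hP; exists 0%N. Qed.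

Lemma fin_union (S1 S2 : (A -> Prop) -> Prop) : finite_primes S1 -> finite_primes S2 ->
  finite_primes (fun P => S1 P \/ S2 P).
Proof.
move=> [n1 [L1 h1]] [n2 [L2 h2]].
exists (n1 + n2)%N, (fun i => if (i < n1)%N then L1 i else L2 (i - n1)%N).
move=> P [/h1 [i [hi hP]]|/h2 [i [hi hP]]].
- by exists i; rewrite hi; split => //; apply: (leq_trans hi); apply: leq_addr.
- exists (n1 + i)%N; rewrite ltn_add2l hi ltnNge leq_addr /= addKn; split => //.
Qed.

Lemma ass_split (M : lmodType A) (F G H : M -> Prop) P : (forall x, F x -> G x) ->
  AssIn F H P -> AssIn F G P \/ AssIn G H P.
Proof.
move=> hFG [hP [y [hy hA]]].
case: (classic (exists b, G (b *: y) /\ ~ F (b *: y))) => [[b [hb1 hb2]]|hno].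
- left; split => //; exists (b *: y); split => // a.
  rewrite scalerA; split.
  + move/hA => /(proj2 (proj2 hP)) [//|hPb]; exfalso; apply: hb2; apply/hA; exact hPb.
  + move=> ha; apply/(hA (a * b)). exact: (my_idealMr b hP.1 ha).
- right; split => //; exists y; split => // a; split.
  + move=> hG; apply/hA; apply: NNPP => hF; apply: hno; by exists a.
  + by move/hA/hFG.
Qed.

Lemma scaleAo (a y : A) : a *: (y : A^o) = a * y.
Proof. by []. Qed.

Lemma ideal_submod (I : A -> Prop) : is_ideal I -> is_submod (E:=A^o) I.
Proof. by move=> [h0 [hD hM]]; split => //; split. Qed.

Lemma ass_ideal_fin : noetherian A -> forall I : A -> Prop, is_ideal I ->
  finite_primes (AssIn (M:=A^o) I (fun _ => True)).
Proof.
move=> hN I hI; apply: NNPP => hnf.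
pose T := {I : A -> Prop | is_ideal I /\ ~ finite_primes (AssIn (M:=A^o) I (fun _ => True))}.
pose K (t : T) := proj1_sig t.
have hK t : is_ideal (K t) := (proj2_sig t).1.
have [t ht] := max_elt hN hK (exist _ I (conj hI hnf)).
case: t ht => I0 [hI0 hnf0] ht; rewrite /K /= in ht.
have h1 : ~ I0 1.
  move=> h1; apply: hnf0; apply: fin_empty => P [hP [y [_ hA]]].
  apply: hP.2.1; apply/(hA 1); rewrite scaleAo mul1r.
  by have := my_idealM y hI0 h1; rewrite mulr1.
have [b [hb hQ]] := max_ann hN (ideal_submod hI0) (x := (1 : A^o)) h1.
set y0 := b *: (1 : A^o) in hb hQ.
pose Q := fun a => I0 (a *: y0).
pose J := fun y => exists i r, I0 i /\ y = i + r * y0.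
have hJ : is_ideal J.
  split; first by exists 0, 0; rewrite mul0r addr0; split => //; exact: hI0.1.
  split.
  - move=> x y [i [r [hi ->]]] [i' [r' [hi' ->]]]; exists (i + i'), (r + r'); split.
      exact: my_idealD.
    by rewrite mulrDl; ring.
  - move=> a y [i [r [hi ->]]]; exists (a * i), (a * r); split; first exact: my_idealM.
    by ring.
have hIJ : forall x, I0 x -> J x by move=> x hx; exists x, 0; rewrite mul0r addr0.
case: (classic (finite_primes (AssIn (M:=A^o) J (fun _ => True)))) => hJf; last first.
  pose tJ : T := exist (fun I => is_ideal I /\ ~ finite_primes (AssIn (M:=A^o) I (fun _ => True))) J (conj hJ hJf).
  have := ht tJ hIJ y0; rewrite /tJ /= => hh; apply: hb; apply: hh.
  exists 0, 1; rewrite add0r mul1r; split => //; exact: hI0.1.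
apply: hnf0.
apply: (@fin_sub _ (fun P => (forall x, P x <-> Q x) \/ AssIn (M:=A^o) J (fun _ => True) P)); last first.
  exact: fin_union (fin_single Q) hJf.
move=> P /(@ass_split (A^o) I0 J (fun _ => True) P hIJ) [|]; last by right.
move=> [hP [y [[i [r [hi ->]]] hA]]]; left.
have hPQ : forall a, P a <-> Q (a * r).
  move=> a; rewrite -hA /Q scaleAo scaleAo mulrDr.
  have -> : a * (r * y0) = a * r * y0 by ring.
  split => h.
  - have -> : a * r * y0 = (a * i + a * r * y0) - a * i by ring.
    exact: (my_idealB hI0 h (my_idealM a hI0 hi)).
  - exact: (my_idealD hI0 (my_idealM a hI0 hi) h).
have hQr : ~ Q r by move=> hr; apply: hP.2.1; apply/hPQ; rewrite mul1r.
move=> x; split; first by move/hPQ; case/(hQ.2.2).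
by move=> hx; apply/hPQ; exact: (my_idealMr r hQ.1 hx).
Qed.
End Fin.


Section Filt.
Variable A : comNzRingType.
Variable E : lmodType A.
Variables (n : nat) (g : 'I_n -> E) (F : E -> Prop).
Hypothesis hF : is_submod F.

Definition Hf (k : nat) (z : E) := exists f (c : 'I_n -> A), F f /\
  z = f + \sum_(i < n | (i < k)%N) c i *: g i.

Lemma Hf_submod k : is_submod (Hf k).
Proof.
split.
  exists 0, (fun _ => 0); split; first exact: my_submod0.
  by rewrite big1 ?addr0 // => i _; rewrite scale0r.
split.
  move=> x y [f [c [hf ->]]] [f' [c' [hf' ->]]]; exists (f + f'), (fun i => c i + c' i).
  split; first exact: my_submodD.
  under [X in _ = _ + X]eq_bigr do rewrite scalerDl.
  by rewrite big_split /= addrACA.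
move=> a x [f [c [hf ->]]]; exists (a *: f), (fun i => a * c i); split.
  exact: my_submodZ.
by rewrite scalerDr scaler_sumr; congr (_ + _); apply: eq_bigr => i _; rewrite scalerA.
Qed.

Lemma F_Hf k x : F x -> Hf k x.
Proof.
move=> hx; exists x, (fun _ => 0); split => //.
by rewrite big1 ?addr0 // => i _; rewrite scale0r.
Qed.

Lemma Hf0 x : Hf 0 x -> F x.
Proof. by move=> [f [c [hf ->]]]; rewrite big_pred0 ?addr0. Qed.

Lemma Hf_step k (hk : (k < n)%N) P :
  AssIn (Hf k) (Hf k.+1) P ->
  AssIn (M:=A^o) (fun a => Hf k (a *: g (Ordinal hk))) (fun _ => True) P.
Proof.
set j := Ordinal hk.
move=> [hP [y [[f [c [hf ->]]] hA]]]; split => //; exists (c j); split => // a.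
rewrite -hA scaleAo -scalerA.
rewrite (bigD1 j) //=.
have -> : \sum_(i < n | (i < k.+1)%N && (i != j)) c i *: g i =
          \sum_(i < n | (i < k)%N) c i *: g i.
  apply: eq_bigl => i; rewrite ltnS leq_eqVlt -(inj_eq val_inj) /=.
  set m := nat_of_ord i; by case: (ltngtP m k).
set z := f + \sum_(i < n | (i < k)%N) c i *: g i.
have hz : Hf k z by exists f, c.
have -> : f + (c j *: g j + \sum_(i < n | (i < k)%N) c i *: g i) = z + c j *: g j.
  by rewrite /z addrCA addrC.
rewrite scalerDr; split => h.
- exact: (my_submodD (Hf_submod k) (my_submodZ a (Hf_submod k) hz) h).
- have := my_submodB (Hf_submod k) h (my_submodZ a (Hf_submod k) hz).
  by rewrite addrAC subrr add0r.
Qed.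

End Filt.

Lemma ass_fin (A : comNzRingType) (E : lmodType A) (F : E -> Prop) :
  noetherian A -> fin_gen E -> is_submod F ->
  finite_primes (AssIn F (fun _ => True)).
Proof.
move=> hN [n [g hg]] hF.
have key : forall k, (k <= n)%N -> finite_primes (AssIn F (Hf g F k)).
  elim=> [_|k IH hk].
    apply: fin_empty => P [hP [y [/(Hf0 (g:=g)) hy hA]]].
    by apply: hP.2.1; apply/(hA 1); rewrite scale1r.
  apply: (fin_sub (S' := fun P => AssIn F (Hf g F k) P \/
      AssIn (M:=A^o) (fun a => Hf g F k (a *: g (Ordinal hk))) (fun _ => True) P)).
    move=> P /(ass_split (@F_Hf _ _ _ g F k)) [h|h]; [left => // | right].
    exact: (Hf_step hF).
  apply: fin_union; first exact: IH (ltnW hk).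
  apply: ass_ideal_fin => //.
  have hs := Hf_submod g hF k.
  split; first by rewrite scale0r; exact: my_submod0.
  split; first by move=> x y hx hy; rewrite scalerDl; exact: my_submodD.
  by move=> a y hy; rewrite -scalerA; exact: my_submodZ.
apply: (fin_sub _ (key n (leqnn n))).
move=> P [hP [y [_ hA]]]; split => //; exists y; split => //.
have [c ->] := hg y; exists 0, c; split; first exact: my_submod0.
by rewrite add0r; apply: eq_bigl => i; rewrite ltn_ord.
Qed.


Section Frac.
Variable A : comNzRingType.
Variable E : lmodType A.

Lemma prime_n1 (p : A -> Prop) : is_prime p -> ~ p 1.
Proof. by case=> _ []. Qed.

Lemma fr_eqI (p : A -> Prop) t (e : E) s e' s' : ~ p t ->
  t *: (s' *: e) = t *: (s *: e') -> fr_eq p e s e' s'.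
Proof. by move=> ht h; exists t; split => //; rewrite scalerBr h subrr. Qed.

Lemma fr_eqE (p : A -> Prop) (e : E) s e' s' : fr_eq p e s e' s' ->
  exists t, ~ p t /\ t *: (s' *: e) = t *: (s *: e').
Proof. by move=> [t [ht h]]; exists t; split => //; apply/subr0_eq; rewrite -scalerBr. Qed.

Lemma prod_avoid (P : A -> Prop) n (G : 'I_n -> E -> Prop) (x : 'I_n -> E) :
  is_prime P -> (forall i, is_submod (G i)) -> (forall i, exists c, ~ P c /\ G i (c *: x i)) ->
  exists t, ~ P t /\ forall i, G i (t *: x i).
Proof.
move=> hP hG h.
pose cf i := proj1_sig (constructive_indefinite_description _ (h i)).
have hcf i : ~ P (cf i) /\ G i (cf i *: x i) := proj2_sig (constructive_indefinite_description _ (h i)).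
exists (\prod_(i < n) cf i); split; first by apply: prime_prod => // i _; exact: (hcf i).1.
move=> i; rewrite (bigD1 i) //= mulrC -scalerA; apply: my_submodZ => //; exact: (hcf i).2.
Qed.

Lemma loc_iff (p : A -> Prop) (F : E -> Prop) e s : is_prime p -> is_submod F ->
  loc p F e s <-> ~ p s /\ exists c, ~ p c /\ F (c *: e).
Proof.
move=> hp hF; split.
- move=> [hs [f [u [hf [hu /fr_eqE [w [hw h]]]]]]]; split => //.
  exists (w * u); split; first exact: prime_nM.
  by rewrite -scalerA h scalerA; apply: my_submodZ.
- move=> [hs [c [hc hce]]]; split => //; exists (c *: e), (c * s); split => //.
  split; first exact: prime_nM.
  apply: (fr_eqI (t := 1)); first exact: prime_n1.
  by rewrite !scale1r !scalerA mulrC.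
Qed.

Lemma in_pAp_iff (p : A -> Prop) a t : is_prime p -> ~ p t -> (in_pAp p a t <-> p a).
Proof.
move=> hp ht; split.
- move=> [b [u [hb [hu [v [hv h]]]]]].
  have : p (v * (a * u)).
    have -> : v * (a * u) = v * (b * t) by apply/subr0_eq; rewrite -mulrBr.
    by apply: my_idealM; [exact: hp.1 | apply: my_idealMr => //; exact: hp.1].
  case/(hp.2.2) => [/hv []|/(hp.2.2) [//|/hu []]].
- move=> ha; exists a, t; split => //; split => //; exists 1; split; first exact: prime_n1.
  by rewrite subrr mulr0.
Qed.

End Frac.

Section LocSub.
Variable A : comNzRingType.
Variable E : lmodType A.
Variables (p : A -> Prop) (J : E -> A -> Prop).
Hypotheses (hp : is_prime p) (hJ : is_locsub p J).

Lemma ls_neq e s : J e s -> ~ p s.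
Proof. by case: hJ => h _; apply: h. Qed.
Lemma ls_eq e s e' s' : J e s -> ~ p s' -> fr_eq p e s e' s' -> J e' s'.
Proof. by case: hJ => _ [h _]; apply: h. Qed.
Lemma ls_0 : J 0 1.
Proof. by case: hJ => _ [_ []]. Qed.
Lemma ls_add e s e' s' : J e s -> J e' s' -> J (s' *: e + s *: e') (s * s').
Proof. by case: hJ => _ [_ [_ [h _]]]; apply: h. Qed.
Lemma ls_scale a t e s : ~ p t -> J e s -> J (a *: e) (t * s).
Proof. by case: hJ => _ [_ [_ [_ h]]]; apply: h. Qed.

Lemma ls_to1 e s : J e s -> J e 1.
Proof.
move=> h; have h1 := ls_scale s (prime_n1 hp) h.
apply: (ls_eq h1 (prime_n1 hp)); apply: (fr_eqI (t := 1)); first exact: prime_n1.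
by rewrite mul1r !scale1r.
Qed.

Lemma ls_of1 e s : J e 1 -> ~ p s -> J e s.
Proof.
move=> h hs; have h1 := ls_scale 1 hs h.
apply: (ls_eq h1 hs); apply: (fr_eqI (t := 1)); first exact: prime_n1.
by rewrite mulr1 !scale1r.
Qed.

Lemma ls_cancel t e : ~ p t -> J (t *: e) 1 -> J e 1.
Proof.
move=> ht h; have h1 := ls_scale 1 ht h.
apply: (ls_eq h1 (prime_n1 hp)); apply: (fr_eqI (t := 1)); first exact: prime_n1.
by rewrite !scale1r mulr1.
Qed.

Lemma ls_Z1 a e : J e 1 -> J (a *: e) 1.
Proof. by move=> h; have := ls_scale a (prime_n1 hp) h; rewrite mulr1. Qed.

Lemma ls_D1 e e' : J e 1 -> J e' 1 -> J (e + e') 1.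
Proof. by move=> h h'; have := ls_add h h'; rewrite !scale1r mulr1. Qed.

Lemma ls_submod : is_submod (fun z => J z 1).
Proof.
split; first exact: ls_0.
by split => [x y|a x]; [apply: ls_D1 | apply: ls_Z1].
Qed.

End LocSub.


Section Fwd.
Variable A : comNzRingType.
Variable E : lmodType A.
Variables (J : (A -> Prop) -> E -> A -> Prop) (F : E -> Prop).
Hypothesis hR : realizes J F.

Lemma JF p e s : is_prime p -> (J p e s <-> ~ p s /\ exists c, ~ p c /\ F (c *: e)).
Proof.
move=> hp; split.
- by move/(hR.2 p hp e s)/(loc_iff _ _ hp hR.1).
- by move/(loc_iff _ _ hp hR.1)/(hR.2 p hp e s).
Qed.

Lemma real_cons : consistency J.
Proof.
move=> p q hp hq hpq e s; split.
- move/(JF _ _ hp) => [hs [c [hc hce]]]; split => //.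
  exists (c *: e), 1, (s * c), 1; split.
    apply/(JF _ _ hq); split; first exact: prime_n1.
    exists 1; split; first exact: prime_n1. by rewrite scale1r.
  split; first exact: prime_nM.
  split; first exact: prime_n1.
  apply: (fr_eqI (t:=1)); first exact: prime_n1.
  by rewrite !scale1r !scalerA mul1r.
- move=> [hs [e' [s' [t [u [/(JF _ _ hq) [hs' [c' [hc' hce']]] [ht [hu /fr_eqE [w [hw h]]]]]]]]]].
  apply/(JF _ _ hp); split => //.
  have npq x : ~ q x -> ~ p x by move=> hx /hpq.
  exists (w * s' * t * c'); split.
    apply: prime_nM => //; last exact: npq.
    apply: prime_nM => //; apply: prime_nM => //; exact: npq.
  have -> : (w * s' * t * c') *: e = c' *: (w *: ((s' * t) *: e)).
    by rewrite !scalerA; congr (_ *: _); ring.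
  rewrite h.
  have -> : c' *: (w *: (s *: (u *: e'))) = (w * s * u) *: (c' *: e').
    by rewrite !scalerA; congr (_ *: _); ring.
  exact: my_submodZ hR.1 hce'.
Qed.

Lemma ass_frakA P : assoc_quot F P -> frakA J P.
Proof.
move=> [hP [e he]]; split => //; exists e, 1; split; first exact: prime_n1.
move=> a t ht; split.
- move/(JF _ _ hP) => [_ [c [hc]]]; rewrite scalerA => /he /(hP.2.2) [/hc []|ha].
  by apply/(in_pAp_iff _ hP ht).
- move/(in_pAp_iff _ hP ht) => ha; apply/(JF _ _ hP); split; first by rewrite mulr1.
  exists 1; split; first exact: prime_n1. by rewrite scale1r; apply/he.
Qed.

Lemma frakA_ass P : noetherian A -> frakA J P -> assoc_quot F P.
Proof.
move=> hN [hP [e [s [hs hL]]]]; split => //.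
have [n [g hg]] := hN P hP.1.
have hgP i : P (g i).
  apply/hg; exists (fun j => if j == i then 1 else 0).
  rewrite (bigD1 i) //= eqxx mul1r big1 ?addr0 // => j /negbTE ->; by rewrite mul0r.
have hc : forall i, exists c, ~ P c /\ F (c *: (g i *: e)).
  move=> i; have := (hL (g i) 1 (prime_n1 hP)).2 (proj2 (in_pAp_iff _ hP (prime_n1 hP)) (hgP i)).
  by case/(JF _ _ hP) => _ [c hc]; exists c.
have [tau [htau hF']] := prod_avoid (G := fun _ => F) (x := fun i => g i *: e) hP (fun _ => hR.1) hc.
exists (tau *: e) => a; split.
- move=> ha.
  have hJ1 : J P ((a * tau) *: e) (1 * s).
    apply/(JF _ _ hP); split; first by rewrite mul1r.
    exists 1; split; first exact: prime_n1. by rewrite scale1r -scalerA.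
  have := (hL (a * tau) 1 (prime_n1 hP)).1 hJ1.
  move/(in_pAp_iff _ hP (prime_n1 hP))/(hP.2.2) => [//|/htau []].
- move/hg => [c ->]; rewrite scaler_suml; apply: my_submod_sum; first exact: hR.1.
  move=> i _.
  have -> : (c i * g i) *: (tau *: e) = c i *: (tau *: (g i *: e)).
    by rewrite !scalerA; congr (_ *: _); ring.
  exact: my_submodZ hR.1 (hF' i).
Qed.

Lemma real_uniq F' : noetherian A -> realizes J F' -> forall x, F x -> F' x.
Proof.
move=> hN hR' x hx; apply: NNPP => hnx.
have [b [hb hQ]] := max_ann hN hR'.1 hnx.
set Q := fun a => F' (a *: (b *: x)) in hQ.
have : J Q (b *: x) 1.
  apply/(JF _ _ hQ); split; first exact: prime_n1.
  exists 1; split; first exact: prime_n1. by rewrite scale1r; apply: my_submodZ hR.1 hx.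
move/(hR'.2 _ hQ (b *: x) 1)/(loc_iff _ _ hQ hR'.1) => [_ [c [hc hc']]].
exact: hc hc'.
Qed.

Lemma real_fin : noetherian A -> fin_gen E -> finite_primes (frakA J).
Proof.
move=> hN hfg; apply: (fin_sub _ (ass_fin hN hfg hR.1)).
move=> P /(frakA_ass hN) [hP [e he]]; split => //; by exists e.
Qed.

End Fwd.


Section Avoid.
Variable A : comNzRingType.
Variable E : lmodType A.

Lemma avoid (G : E -> Prop) (e : E) (p : A -> Prop) m (L : nat -> A -> Prop) :
  noetherian A -> is_submod G -> is_prime p ->
  (forall b, is_prime (fun a => G (a *: (b *: e))) ->
     ~ (forall x, G (x *: (b *: e)) -> p x) /\
     exists i, (i < m)%N /\ forall x, G (x *: (b *: e)) <-> L i x) ->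
  exists t, ~ p t /\ G (t *: e).
Proof.
move=> hN hG hp hcov.
have hch : forall i : 'I_m, exists a, ~ p a /\ ((exists a', L i a' /\ ~ p a') -> L i a).
  move=> i; case: (classic (exists a', L i a' /\ ~ p a')) => [[a' [h1 h2]]|hno].
  - by exists a'.
  - exists 1; split; [exact: prime_n1 | by move=> /hno].
pose af i := proj1_sig (constructive_indefinite_description _ (hch i)).
have haf i : ~ p (af i) /\ ((exists a', L i a' /\ ~ p a') -> L i (af i))
  := proj2_sig (constructive_indefinite_description _ (hch i)).
pose c := \prod_(i < m) af i.
have hc : ~ p c by apply: prime_prod => // i _; exact: (haf i).1.
have hcQ : forall b, is_prime (fun a => G (a *: (b *: e))) -> G (c *: (b *: e)).
  move=> b hb; have [hnot [i [hi hiff]]] := hcov b hb.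
  have [x [hx1 hx2]] : exists x, G (x *: (b *: e)) /\ ~ p x.
    apply: NNPP => hno; apply: hnot => x hx; apply: NNPP => hpx; apply: hno; by exists x.
  pose io := Ordinal hi.
  have hLa : L i (af io) by apply: (haf io).2; exists x; split => //; apply/hiff.
  have : G (af io *: (b *: e)) by apply/hiff.
  rewrite /c (bigD1 io) //= mulrC -scalerA => h.
  exact: my_submodZ hG h.
pose I k := fun a => G (a *: (c ^+ k *: e)).
have hI k : is_ideal (I k).
  split; first by rewrite /I scale0r; exact: my_submod0.
  split; first by move=> x y hx hy; rewrite /I scalerDl; exact: my_submodD.
  by move=> a y hy; rewrite /I -scalerA; exact: my_submodZ.
have hinc k x : I k x -> I k.+1 x.
  rewrite /I exprS -scalerA.
  have -> : x *: (c *: (c ^+ k *: e)) = c *: (x *: (c ^+ k *: e)) by rewrite !scalerA; congr (_ *: _); ring.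
  exact: my_submodZ.
have [k hk] := acc_chain hN hI hinc.
exists (c ^+ k); split.
  have hpow : forall k', ~ p (c ^+ k').
    elim=> [|k' IH]; first by rewrite expr0; exact: prime_n1.
    by rewrite exprS; apply: prime_nM.
  exact: hpow.
apply: NNPP => hn.
have [b [hb hQ]] := max_ann hN hG hn.
have E1 : b *: (c ^+ k *: e) = (b * c ^+ k) *: e by rewrite scalerA.
rewrite E1 in hQ.
have := hcQ _ hQ => h.
apply: hb; apply: (hk b); rewrite /I.
have -> : b *: (c ^+ k.+1 *: e) = c *: ((b * c ^+ k) *: e).
  by rewrite !scalerA exprS; congr (_ *: _); ring.
exact: h.
Qed.
End Avoid.

Section Bwd.
Variable A : comNzRingType.
Variable E : lmodType A.
Variables (J : (A -> Prop) -> E -> A -> Prop).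
Hypothesis hJ : forall p, is_prime p -> is_locsub p (J p).
Hypothesis hC : consistency J.

Lemma mono Q q z : is_prime Q -> is_prime q -> (forall x, Q x -> q x) -> J q z 1 -> J Q z 1.
Proof.
move=> hQ hq hQq hz; apply/(hC hQ hq hQq z 1); split; first exact: prime_n1.
exists z, 1, 1, 1; split => //; split; first exact: prime_n1.
split; first exact: prime_n1.
apply: (fr_eqI (t := 1)); first exact: prime_n1.
by rewrite mulr1 !scale1r.
Qed.

Lemma KQ Q q y : is_prime Q -> is_prime q -> (forall x, Q x -> q x) ->
  (J Q y 1 <-> exists c, ~ Q c /\ J q (c *: y) 1).
Proof.
move=> hQ hq hQq; split.
- move/(hC hQ hq hQq y 1) => [_ [e' [s' [t [u [he' [ht [hu /fr_eqE [w [hw h]]]]]]]]]].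
  exists (w * t); split; first exact: prime_nM.
  have h1 := ls_scale (hJ hq) (w * u) (prime_n1 hq) he'.
  apply: (ls_eq (hJ hq) h1 (prime_n1 hq)).
  apply: (fr_eqI (t := 1)); first exact: prime_n1.
  rewrite !scale1r mul1r.
  have -> : (w * u) *: e' = w *: (1 *: (u *: e')) by rewrite scale1r scalerA.
  by rewrite -h !scalerA; congr (_ *: _); ring.
- move=> [c [hc h]]; apply/(hC hQ hq hQq y 1); split; first exact: prime_n1.
  exists (c *: y), 1, c, 1; split => //; split => //; split; first exact: prime_n1.
  apply: (fr_eqI (t := 1)); first exact: prime_n1.
  by rewrite !scale1r mul1r.
Qed.

Lemma SA q y : is_prime q -> is_prime (fun a => J q (a *: y) 1) ->
  frakA J (fun a => J q (a *: y) 1) /\ (forall x, J q (x *: y) 1 -> q x) /\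
  ~ J (fun a => J q (a *: y) 1) y 1.
Proof.
set Q := fun a => J q (a *: y) 1 => hq hQ.
have hQq : forall x, Q x -> q x.
  move=> x hx; apply: NNPP => hnx; apply: hQ.2.1; rewrite /Q scale1r.
  exact: (ls_cancel hq (hJ hq) hnx hx).
split; last split => //.
- split => //; exists y, 1; split; first exact: prime_n1.
  move=> a t ht; split.
  + move/(ls_to1 hQ (hJ hQ))/(KQ _ hQ hq hQq) => [c [hc]].
    rewrite scalerA => /(hQ.2.2) [/hc []|ha].
    by apply/(in_pAp_iff _ hQ ht).
  + move/(in_pAp_iff _ hQ ht) => ha.
    apply: (ls_of1 hQ (hJ hQ)); last by rewrite mulr1.
    apply/(KQ _ hQ hq hQq); exists 1; split; first exact: prime_n1.
    by rewrite scale1r.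
- by move/(KQ _ hQ hq hQq) => [c [hc h]]; apply: hc.
Qed.

Hypothesis hN : noetherian A.

Lemma stepA q z : is_prime q -> ~ J q z 1 ->
  exists Q, frakA J Q /\ (forall x, Q x -> q x) /\ ~ J Q z 1.
Proof.
move=> hq hz.
have [b [hb hP]] := max_ann hN (ls_submod hq (hJ hq)) hz.
have [hA [hsub hnot]] := SA hq hP.
exists (fun a => J q (a *: (b *: z)) 1); split => //; split => //.
by move=> h; apply: hnot; apply: (ls_Z1 hA.1 (hJ hA.1)).
Qed.

Hypothesis hfin : finite_primes (frakA J).

Lemma bwd_main p e : is_prime p -> J p e 1 ->
  exists t, ~ p t /\ forall q, is_prime q -> J q (t *: e) 1.
Proof.
move=> hp he; have [n [L hL]] := hfin.
have hi : forall i : 'I_n, exists c, ~ p c /\ (fun z => frakA J (L i) -> J (L i) z 1) (c *: e).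
  move=> i; case: (classic (frakA J (L i))) => hAi; last first.
    by exists 1; split; [exact: prime_n1 | move=> /hAi].
  have hPi := hAi.1.
  have [|t [ht hte]] := avoid (G := fun z => J (L i) z 1) (e := e) (m := n) (L := L) hN (ls_submod hPi (hJ hPi)) hp.
    move=> b hb.
    have [hfr [hsub hnot]] := SA hPi hb.
    split.
      move=> hsp; apply: hnot; apply: (ls_Z1 hfr.1 (hJ hfr.1)).
      exact: (mono hfr.1 hp hsp he).
    exact: hL _ hfr.
  by exists t; split.
have hGs : forall i : 'I_n, is_submod (fun z => frakA J (L i) -> J (L i) z 1).
  move=> i; split; first by move=> h; exact: ls_0 (hJ h.1).
  split; first by move=> x y hx hy h; have hh := ls_D1 (hJ h.1) (hx h) (hy h); exact hh.
  by move=> a x hx h; have hh := ls_Z1 h.1 (hJ h.1) a (hx h); exact hh.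
have [tau [htau hall]] := prod_avoid (x := fun _ => e) hp hGs hi.
exists tau; split => // q hq; apply: NNPP => hnq.
have [Q [hQA [hQq hnQ]]] := stepA hq hnq.
have [j [hj hjL]] := hL Q hQA.
have eQ : Q = L j.
  by apply: functional_extensionality => x; apply: propositional_extensionality.
apply: hnQ; rewrite eQ; apply: (hall (Ordinal hj)); rewrite /= -eQ //.
Qed.

Definition Fb z := forall q, is_prime q -> J q z 1.

Lemma bwd_real : realizes J Fb.
Proof.
have hFs : is_submod Fb.
  split; first by move=> q hq; exact: ls_0 (hJ hq).
  split; first by move=> x y hx hy q hq; have hh := ls_D1 (hJ hq) (hx q hq) (hy q hq); exact hh.
  by move=> a x hx q hq; have hh := ls_Z1 hq (hJ hq) a (hx q hq); exact hh.
split => // p hp e s; split.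
- move/(loc_iff _ _ hp hFs) => [hs [c [hc hce]]].
  apply: (ls_of1 hp (hJ hp)) _ hs; apply: (ls_cancel hp (hJ hp)) hc (hce p hp).
- move=> hes; have hs := ls_neq (hJ hp) hes.
  have [t [ht hte]] := bwd_main hp (ls_to1 hp (hJ hp) hes).
  apply/(loc_iff _ _ hp hFs); split => //; by exists t.
Qed.

End Bwd.


Theorem lemma3 (A : comNzRingType) (E : lmodType A)
  (J : (A -> Prop) -> E -> A -> Prop) :
  noetherian A -> fin_gen E ->
  (forall p, is_prime p -> is_locsub p (J p)) ->
  ((exists F : E -> Prop, realizes J F) <->
     (consistency J /\ finite_primes (frakA J))) /\
  (forall F : E -> Prop, realizes J F ->
     (forall F' : E -> Prop, realizes J F' -> forall x, F x <-> F' x) /\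
     (forall P : A -> Prop, assoc_quot F P <-> frakA J P)).
Proof.
move=> hN hfg hJ; split.
  split.
  - move=> [F hR]; split; [exact: real_cons hR | exact: real_fin hR hN hfg].
  - move=> [hC hfin]; exists (Fb J); exact: bwd_real hJ hC hN hfin.
move=> F hR; split.
- move=> F' hR' x; split; [exact: (real_uniq hR hN hR') | exact: (real_uniq hR' hN hR)].
- move=> P; split; [exact: (ass_frakA hR) | exact: (frakA_ass hR hN)].
Qed.
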